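(* Under the standing assumptions, suppose $\lambda_i(\pi)\neq 0$ for some $i\in I$. Define $\pi'\in\mathbb{R}^n$ by $\pi'_j=\pi_j$ for $j\neq i$ and $\pi'_i=\pi_i+\lambda_i(\pi)$, and define $\pi'_0=\pi_0$ if $i\in S^{+}(\pi)$ and $\pi'_0=\pi_0+\lambda_i(\pi)$ otherwise. Then: (1) $\pi'^\top x\le\pi'_0$ holds for all $x\in X$; (2) $F(\pi,\pi_0)\subset F(\pi',\pi'_0)$ and $\dim F(\pi',\pi'_0)\ge \dim F(\pi,\pi_0)+1$; (3) for every $\bar x\in[0,1]^n$ with $\pi^\top\bar x>\pi_0$ we have $\pi'^\top\bar x>\pi'_0$.
   Context: Let $n\ge 1$, $I=\{1,\dots,n\}$ and $X\subseteq\{0,1\}^n$. Standing assumptions: (a) the inequality $\pi^\top x\le \pi_0$ is valid for $X$ and supports $\mathrm{conv}(X)$, i.e. $\pi_0=\max_{x\in X}\pi^\top x$; (b) for every $i\in I$ there exist $x,x'\in X$ with $x_i=0$ and $x'_i=1$. For any $(\sigma,\sigma_0)$, the face is $F(\sigma,\sigma_0):=\{x\in\mathrm{conv}(X):\sigma^\top x=\sigma_0\}$. The disjunctive slack vector $\lambda(\pi)\in\mathbb{R}^n$ is defined by $\lambda^0_i(\pi):=\max_{x\in X}\{\pi^\top x: x_i=0\}$, $\lambda^1_i(\pi):=\max_{x\in X}\{\pi^\top x:x_i=1\}$ and $\lambda_i(\pi):=\lambda^0_i(\pi)-\lambda^1_i(\pi)$ for $i\in I$. Let $S^{-}(\pi)=\{i\in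 I:\lambda_i(\pi)<0\}$, $S^{0}(\pi)=\{i\in I:\lambda_i(\pi)=0\}$, $S^{+}(\pi)=\{i\in I:\lambda_i(\pi)>0\}$. *)

(* Defs.v *)
From HB Require Import structures.
From mathcomp Require Import all_boot all_order all_algebra.
From Stdlib Require Import ClassicalEpsilon.
Set Implicit Arguments. Unset Strict Implicit. Unset Printing Implicit Defensive.
Import Order.TTheory GRing.Theory Num.Theory.
Local Open Scope ring_scope.

Section Defs.
Variables (R : realFieldType) (n : nat).

Definition bpt := {ffun 'I_n -> bool}.
Definition vec (x : bpt) : 'rV[R]_n := \row_j ((x j : nat)%:R).

Definition dot (a b : 'rV[R]_n) : R := \sum_(j < n) a 0 j * b 0 j.

(* maximum of F over a nonempty finite set A (0 if A is empty) *)
Definition setmax {T : finType} (A : {set T}) (F : T -> R) : R :=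
  match [pick x in A] with
  | Some x0 => \big[Num.max/F x0]_(x in A) F x
  | None => 0
  end.

Definition lambda0 (X : {set bpt}) (pi : 'rV[R]_n) (i : 'I_n) : R :=
  setmax [set x in X | x i == false] (fun x => dot pi (vec x)).
Definition lambda1 (X : {set bpt}) (pi : 'rV[R]_n) (i : 'I_n) : R :=
  setmax [set x in X | x i == true] (fun x => dot pi (vec x)).
Definition lambda (X : {set bpt}) (pi : 'rV[R]_n) (i : 'I_n) : R :=
  lambda0 X pi i - lambda1 X pi i.

Definition conv (X : {set bpt}) (y : 'rV[R]_n) : Prop :=
  exists w : bpt -> R, (forall x, x \in X -> 0 <= w x) /\
    \sum_(x in X) w x = 1 /\ y = \sum_(x in X) w x *: vec x.

Definition face (X : {set bpt}) (sigma : 'rV[R]_n) (sigma0 : R)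
  (y : 'rV[R]_n) : Prop := conv X y /\ dot sigma y = sigma0.

Definition has_aff_indep (S : 'rV[R]_n -> Prop) (k : nat) : Prop :=
  exists p : 'I_k.+1 -> 'rV[R]_n, (forall i, S (p i)) /\
    row_free (\matrix_(i < k) (p (lift ord0 i) - p ord0)).

Definition pb (P : Prop) : bool := if excluded_middle_informative P then true else false.

Definition affdim (S : 'rV[R]_n -> Prop) : int :=
  if pb (exists y, S y) then
    Posz (\max_(k < n.+1 | pb (has_aff_indep S k)) (k : nat))
  else -1.

End Defs.

(* Main.v *)
Require Import Defs.
From HB Require Import structures.
From mathcomp Require Import all_boot all_order all_algebra.
From mathcomp Require Import ring lra.
From Stdlib Require Import ClassicalEpsilon.
Import Order.TTheory GRing.Theory Num.Theory.
Local Open Scope ring_scope.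

Section Helpers.
Variables (R : realFieldType) (n : nat).

Lemma setmax_ub (T : finType) (A : {set T}) (F : T -> R) x :
  x \in A -> F x <= setmax A F.
Proof.
move=> Hx; rewrite /setmax; case: pickP => [x0 Hx0|H]; last by rewrite H in Hx.
by rewrite (bigD1 x) //= le_max lexx.
Qed.

Lemma setmax_ex (T : finType) (A : {set T}) (F : T -> R) x :
  x \in A -> exists2 y, y \in A & F y = setmax A F.
Proof.
move=> Hx; rewrite /setmax; case: pickP => [x0 Hx0|H]; last by rewrite H in Hx.
apply: (big_ind (fun v => exists2 y, y \in A & F y = v)).
- by exists x0.
- move=> a b [ya Ha Ea] [yb Hb Eb].
  case: (leP a b) => _; [by exists yb | by exists ya].
- by move=> y Hy; exists y.
Qed.

Lemma dot_upd (pi : 'rV[R]_n) (i : 'I_n) l y :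
  dot (\row_j (if j == i then pi 0 j + l else pi 0 j)) y = dot pi y + l * y 0 i.
Proof.
rewrite /dot (bigD1 i) //= [X in _ = X + _](bigD1 i) //= mxE eqxx.
rewrite (eq_bigr (fun j => pi 0 j * y 0 j)); last first.
  by move=> j /negbTE Hj; rewrite mxE Hj.
by rewrite mulrDl addrAC.
Qed.

Lemma dot_sum (X : {set bpt n}) (w : bpt n -> R) (pi : 'rV[R]_n) :
  dot pi (\sum_(x in X) w x *: vec R x) = \sum_(x in X) w x * dot pi (vec R x).
Proof.
rewrite /dot.
under eq_bigr => j _ do rewrite summxE big_distrr /=.
rewrite exchange_big; apply: eq_bigr => x _; rewrite big_distrr.
by apply: eq_bigr => j _; rewrite mxE mulrCA.
Qed.

Lemma coord_sum (X : {set bpt n}) (w : bpt n -> R) (i : 'I_n) :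
  (\sum_(x in X) w x *: vec R x) 0 i = \sum_(x in X) w x * (x i)%:R.
Proof.
by rewrite summxE; apply: eq_bigr => x _; rewrite !mxE.
Qed.

Lemma conv_vec (X : {set bpt n}) x : x \in X -> conv X (vec R x).
Proof.
move=> Hx; exists (fun y => if y == x then 1 else 0); split.
  by move=> y _; case: (y == x).
split.
  by rewrite (bigD1 x) //= eqxx big1 ?addr0 // => y /andP[_ /negbTE ->].
rewrite (bigD1 x) //= eqxx scale1r big1 ?addr0 // => y /andP[_ /negbTE ->].
by rewrite scale0r.
Qed.

Lemma pbT (P : Prop) : P -> pb P = true.
Proof. by rewrite /pb; case: excluded_middle_informative. Qed.
Lemma pbE (P : Prop) : pb P -> P.
Proof. by rewrite /pb; case: excluded_middle_informative. Qed.

End Helpers.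
Theorem theorem1 (R : realFieldType) (n : nat) (X : {set bpt n})
    (pi : 'rV[R]_n) (pi0 : R) (i : 'I_n) :
  (0 < n)%N ->
  pi0 = setmax X (fun x => dot pi (vec R x)) ->
  (forall j : 'I_n, (exists2 x, x \in X & x j = false) /\
                    (exists2 x, x \in X & x j = true)) ->
  lambda X pi i != 0 ->
  let pi' := \row_j (if j == i then pi 0 j + lambda X pi i else pi 0 j) in
  let pi0' := if 0 < lambda X pi i then pi0 else pi0 + lambda X pi i in
  [/\ (forall x, x \in X -> dot pi' (vec R x) <= pi0'),
      (forall y, face X pi pi0 y -> face X pi' pi0' y),
      affdim (face X pi' pi0') >= affdim (face X pi pi0) + 1
    & (forall xb : 'rV[R]_n, (forall j, 0 <= xb 0 j <= 1) ->
         dot pi xb > pi0 -> dot pi' xb > pi0')].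
Proof.
move=> n0 Hpi0 Hb Hl pi' pi0'.
set l := lambda X pi i.
set d := fun x : bpt n => dot pi (vec R x).
set l0 := lambda0 X pi i; set l1 := lambda1 X pi i.
have El : l = l0 - l1 by [].
have [[xa Hxa Exa] [xb1 Hxb1 Exb1]] := Hb i.
have Hub0 : forall x, x \in X -> x i = false -> d x <= l0.
  by move=> x Hx Hxi; rewrite /d /l0 /lambda0; apply: setmax_ub; rewrite inE Hx Hxi.
have Hub1 : forall x, x \in X -> x i = true -> d x <= l1.
  by move=> x Hx Hxi; rewrite /d /l1 /lambda1; apply: setmax_ub; rewrite inE Hx Hxi.
have [x0 Hx0 Ex0] : exists2 x, x \in [set x in X | x i == false] & d x = l0.
  have H : xa \in [set x in X | x i == false] by rewrite inE Hxa Exa.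
  by rewrite /d /l0 /lambda0; apply: setmax_ex H.
have [x1 Hx1 Ex1] : exists2 x, x \in [set x in X | x i == true] & d x = l1.
  have H : xb1 \in [set x in X | x i == true] by rewrite inE Hxb1 Exb1.
  by rewrite /d /l1 /lambda1; apply: setmax_ex H.
move: Hx0 Hx1; rewrite !inE => /andP[Hx0X /eqP Hx0i] /andP[Hx1X /eqP Hx1i].
have Hpub : forall x, x \in X -> d x <= pi0.
  by move=> x Hx; rewrite Hpi0 /d; apply: setmax_ub.
have [xs HxsX Exs] : exists2 x, x \in X & d x = pi0.
  by rewrite Hpi0 /d; apply: setmax_ex Hxa.
have Hl0p : l0 <= pi0 by rewrite -Ex0; apply: Hpub.
have Hl1p : l1 <= pi0 by rewrite -Ex1; apply: Hpub.
have Hpl : pi0 <= l0 \/ pi0 <= l1.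
  rewrite -Exs; case Hxs: (xs i); [right; exact: Hub1 | left; exact: Hub0].
have Epos : 0 < l -> pi0 = l0.
  move=> lp; apply/eqP; rewrite eq_le Hl0p andbT.
  by case: Hpl => // H; apply: (le_trans H); rewrite El subr_gt0 in lp; apply: ltW.
have Eneg : ~~ (0 < l) -> pi0 = l1.
  move=> ln; have lt : l < 0 by rewrite lt_neqAle Hl /= leNgt.
  apply/eqP; rewrite eq_le Hl1p andbT.
  by case: Hpl => // H; apply: (le_trans H); rewrite El subr_lt0 in lt; apply: ltW.
have Hdp : forall y, dot pi' y = dot pi y + l * y 0 i by move=> y; apply: dot_upd.
have Hface : forall y, face X pi pi0 y -> y 0 i = (if 0 < l then 0 else 1).
  move=> y [[w [Hw [Hs Hy]]] Hd]; subst y.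
  have Ht : forall x, x \in X -> w x * (pi0 - d x) = 0.
    apply: psumr_eq0P.
      by move=> x Hx; apply: mulr_ge0; [apply: Hw | rewrite subr_ge0; apply: Hpub].
    under eq_bigr => x _ do rewrite mulrBr.
    rewrite sumrB -big_distrl /= Hs mul1r.
    by move: Hd; rewrite dot_sum => ->; rewrite subrr.
  have Hw0 : forall x, x \in X -> d x < pi0 -> w x = 0.
    move=> x Hx Hlt; move: (Ht x Hx) => /eqP; rewrite mulf_eq0 => /orP[/eqP //|].
    by rewrite subr_eq0 => /eqP E; rewrite E ltxx in Hlt.
  rewrite coord_sum; case: ifP => lp.
  - apply: big1 => x Hx; case Hxi: (x i); last by rewrite mulr0.
    rewrite (Hw0 x Hx) ?mul0r //; apply: (le_lt_trans (Hub1 x Hx Hxi)).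
    by apply: (lt_le_trans _ Hl0p); rewrite El subr_gt0 in lp.
  - rewrite -[in RHS]Hs; apply: eq_bigr => x Hx; case Hxi: (x i); first by rewrite /= mulr1n mulr1.
    have lt : l < 0 by rewrite lt_neqAle Hl /= leNgt lp.
    rewrite (Hw0 x Hx) ?mul0r //; apply: (le_lt_trans (Hub0 x Hx Hxi)).
    by apply: (lt_le_trans _ Hl1p); rewrite El subr_lt0 in lt.
have Hpart2 : forall y, face X pi pi0 y -> face X pi' pi0' y.
  move=> y Hy; have Hyi := Hface y Hy; case: Hy => Hc Hd; split => //.
  rewrite Hdp Hd Hyi /pi0' -/l; case: ifP => _; first by rewrite mulr0 addr0.
  by rewrite mulr1.
split => //.
- move=> x Hx; rewrite Hdp /pi0' -/l mxE; case: ifP => lp; case Hxi: (x i) => /=.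
  + rewrite mulr1n mulr1; move: (Hub1 x Hx Hxi) (Epos lp); rewrite /d El; lra.
  + rewrite mulr0 addr0; move: (Hub0 x Hx Hxi); rewrite /d; lra.
  + rewrite mulr1n mulr1; move: (Hpub x Hx); rewrite /d; lra.
  + rewrite mulr0 addr0; move: (Hub0 x Hx Hxi) (Eneg (negbT lp)); rewrite /d El; lra.
- have Fne : exists y, face X pi pi0 y.
    by exists (vec R xs); split; [apply: conv_vec | exact: Exs].
  have F'ne : exists y, face X pi' pi0' y.
    by case: Fne => y Hy; exists y; apply: Hpart2.
  rewrite /affdim (pbT _ Fne) (pbT _ F'ne).
  set F := face X pi pi0; set F' := face X pi' pi0'.
  have P0 : pb (has_aff_indep F (@ord0 n)).
    apply: pbT; exists (fun _ => vec R xs); split.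
      by move=> _; split; [apply: conv_vec | exact: Exs].
    by apply: inj_row_free => v _; apply: thinmx0.
  rewrite (@bigop.bigmax_eq_arg _ (@ord0 n) (fun k : 'I_n.+1 => pb (has_aff_indep F k)) (fun k => k) P0).
  case: arg_maxnP => // k Pk _.
  have [p [Hp Hfree]] := pbE _ Pk.
  set z := vec R (if 0 < l then x1 else x0).
  have Hz : F' z.
    split; first by apply: conv_vec; case: ifP.
    rewrite Hdp /z /pi0' -/l mxE; case: ifP => lp.
      by rewrite Hx1i /= mulr1n mulr1; move: Ex1 (Epos lp); rewrite /d El => ->; lra.
    by rewrite Hx0i /= mulr0 addr0; move: Ex0 (Eneg (negbT lp)); rewrite /d El => ->; lra.
  have Hzi : z 0 i - (if 0 < l then 0 else 1) != 0.
    rewrite /z mxE; case: ifP => _; [rewrite Hx1i | rewrite Hx0i] => /=.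
      by rewrite mulr1n subr0 oner_neq0.
    by rewrite sub0r oppr_eq0 oner_neq0.
  pose p' (j : 'I_k.+2) : 'rV[R]_n :=
    match unlift ord0 j with
    | None => p ord0
    | Some j' => match unlift ord0 j' with None => z | Some j'' => p (lift ord0 j'') end
    end.
  have Hp'0 : p' ord0 = p ord0 by rewrite /p' unlift_none.
  have Ez : p' (lift ord0 ord0) = z by rewrite /p' liftK unlift_none.
  have Ep : forall j, p' (lift ord0 (lift ord0 j)) = p (lift ord0 j) by move=> j; rewrite /p' !liftK.
  have Hind : has_aff_indep F' k.+1.
    exists p'; split.
      move=> j; case: (unliftP ord0 j) => [j'|] ->; last by rewrite Hp'0; exact: Hpart2 (Hp _).
      case: (unliftP ord0 j') => [j''|] ->; first by rewrite Ep; exact: Hpart2 (Hp _).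
      by rewrite Ez.
    apply: inj_row_free => v Hv.
    have Hc : forall c, \sum_(j < k.+1) v 0 j * (p' (lift ord0 j) 0 c - p' ord0 0 c) = 0.
      move=> c; move/matrixP: Hv => /(_ 0 c); rewrite !mxE => H; rewrite -[RHS]H.
      by apply: eq_bigr => j _; rewrite !mxE.
    have Hv0 : v 0 ord0 = 0.
      have := Hc i; rewrite big_ord_recl big1 ?addr0; last first.
        by move=> j _; rewrite Ep Hp'0 (Hface _ (Hp _)) (Hface _ (Hp _)) subrr mulr0.
      rewrite Ez Hp'0 (Hface _ (Hp _)) => /eqP; rewrite mulf_eq0 (negbTE Hzi) orbF.
      by move/eqP.
    have Hw : \row_j v 0 (lift ord0 j) = 0.
      apply: (row_free_inj Hfree); rewrite mul0mx; apply/matrixP => a c; rewrite !mxE.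
      have := Hc c; rewrite big_ord_recl Hv0 mul0r add0r => H; rewrite -[RHS]H.
      by apply: eq_bigr => j _; rewrite !mxE Ep Hp'0.
    apply/matrixP => a j; rewrite (ord1 a) [RHS]mxE.
    case: (unliftP ord0 j) => [j'|] ->; last exact: Hv0.
    by move/matrixP: Hw => /(_ 0 j'); rewrite !mxE.
  have Hk : (k.+1 < n.+1)%N.
    case: Hind => p'' [_ Hf]; have := rank_leq_col (\matrix_(j < k.+1) (p'' (lift ord0 j) - p'' ord0)).
    by rewrite (eqP Hf).
  have := @leq_bigmax_cond _ (fun k0 : 'I_n.+1 => pb (has_aff_indep F' k0))
     (fun k0 : 'I_n.+1 => (k0 : nat)) (Ordinal Hk) (pbT _ Hind).
  by rewrite -[1%R]/(Posz 1%N) -PoszD lez_nat addn1.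
- move=> xv Hxv Hgt; rewrite Hdp /pi0' -/l; have /andP[h0 h1] := Hxv i.
  case: ifP => lp; first by nra.
  have lt : l < 0 by rewrite lt_neqAle Hl /= leNgt lp.
  nra.
Qed.
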